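(* Let $T$ be a tree and let $f_0,f_t$ be token-placements of $T$ with colors $\{1,2\}$ having the same number of color-1 tokens. For an edge $e=xy$ let $T(x)$ be the component of $T-e$ containing $x$ and $\mathrm{diff}(e)=\bigl|\,|\{v\in T(x): f_0(v)=1\}|-|\{v\in T(x): f_t(v)=1\}|\,\bigr|$. Then $\mathrm{OPT}(f_0,f_t)=\sum_{e\in E(T)}\mathrm{diff}(e)$.
   Context: A token-placement of a graph $G=(V,E)$ with colors $C=\{1,\dots,c\}$ is a surjective map $f\colon V\to C$. Two distinct token-placements $f,f'$ are adjacent if there is an edge $uv\in E$ with $f'(u)=f(v)$, $f'(v)=f(u)$ and $f'(w)=f(w)$ for all other $w$. A swapping sequence between $f$ and $f'$ is a sequence $f_1=f,\dots,f_h=f'$ of token-placements with consecutive members adjacent; its length is $h-1$. $\mathrm{OPT}(f,f')$ is the minimum length of such a sequence. *)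

(* Defs.v *)
From mathcomp Require Import all_boot all_order all_algebra.
Set Implicit Arguments. Unset Strict Implicit. Unset Printing Implicit Defensive.

Section Defs.
Variable T : finType.

Definition simple_graph (e : rel T) : Prop :=
  symmetric e /\ irreflexive e.

Definition remove_edge (e : rel T) (x y : T) : rel T :=
  fun a b => e a b && ~~ (((a == x) && (b == y)) || ((a == y) && (b == x))).

(* Tree: connected simple graph with no cycle, i.e. every edge is a bridge. *)
Definition is_tree (e : rel T) : Prop :=
  simple_graph e /\ (forall x y, connect e x y) /\
  (forall x y, e x y -> ~~ connect (remove_edge e x y) x y).

Definition token_placement (c : nat) (f : T -> nat) : Prop :=
  (forall v, 1 <= f v <= c) /\ (forall i, 1 <= i <= c -> exists v, f v = i).

Definition adjacent (e : rel T) (f g : T -> nat) : Prop :=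
  f <> g /\ exists u v, [/\ e u v, g u = f v, g v = f u &
                          forall w, w <> u -> w <> v -> g w = f w].

Inductive swap_seq (c : nat) (e : rel T) : (T -> nat) -> (T -> nat) -> nat -> Prop :=
| swap_nil f : token_placement c f -> swap_seq c e f f 0
| swap_cons f g h n : token_placement c f -> adjacent e f g ->
    swap_seq c e g h n -> swap_seq c e f h n.+1.

Definition is_OPT (c : nat) (e : rel T) (f f' : T -> nat) (n : nat) : Prop :=
  swap_seq c e f f' n /\ (forall m, swap_seq c e f f' m -> n <= m).

Definition ones_in_comp (e : rel T) (x y : T) (f : T -> nat) : nat :=
  #|[set v | connect (remove_edge e x y) x v & f v == 1]|.

Definition diff_edge (e : rel T) (f0 ft : T -> nat) (x y : T) : nat :=
  `|ones_in_comp e x y f0 - ones_in_comp e x y ft|%N.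

End Defs.

(* Main.v *)
Require Import Defs.
From mathcomp Require Import all_boot all_order all_algebra.
From mathcomp Require Import zify.
From Stdlib Require Import FunctionalExtensionality.
Set Implicit Arguments. Unset Strict Implicit. Unset Printing Implicit Defensive.

Section Graph.
Variable T : finType.

Lemma connect_ind_gen (r : rel T) (P : T -> Prop) x :
  P x -> (forall a b, P a -> r a b -> P b) -> forall y, connect r x y -> P y.
Proof.
move=> Px step y /connectP [p pth ->]; elim: p x Px pth => //= z p IH x Px /andP[rxz pth].
exact: IH (step _ _ Px rxz) pth.
Qed.

Lemma connect_restrict (r : rel T) (P : pred T) a b :
  P a -> (forall u v, P u -> r u v -> P v) -> connect r a b ->
  connect [rel u v | r u v && P u && P v] a b.
Proof.
move=> Pa cl /connectP [p pth ->]; elim: p a Pa pth => //= z p IH a Pa /andP[raz pth].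
have Pz := cl _ _ Pa raz.
apply: connect_trans (IH _ Pz pth).
by apply: connect1; rewrite /= raz Pa Pz.
Qed.

Variable e : rel T.
Hypothesis tree : is_tree e.

Let esym : symmetric e. Proof. by case: tree => [[]]. Qed.
Let eirr : irreflexive e. Proof. by case: tree => [[]]. Qed.
Let econ : forall x y, connect e x y. Proof. by case: tree => _ []. Qed.
Let ebr : forall x y, e x y -> ~~ connect (remove_edge e x y) x y.
Proof. by case: tree => _ []. Qed.

Definition K x y := [set z | connect (remove_edge e x y) x z].

Lemma rem_sym x y : symmetric (remove_edge e x y).
Proof.
move=> a b; rewrite /remove_edge esym.
by case: (a == x); case: (a == y); case: (b == x); case: (b == y).
Qed.

Lemma rem_swap x y : remove_edge e x y =2 remove_edge e y x.
Proof. move=> a b; rewrite /remove_edge.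
by case: (a == x); case: (a == y); case: (b == x); case: (b == y). Qed.

Lemma K_self x y : x \in K x y.
Proof. by rewrite inE connect0. Qed.

Lemma K_notin x y : e x y -> y \notin K x y.
Proof. by move=> exy; rewrite inE; apply: ebr. Qed.

Lemma K_edge x y u v : e u v -> ~~ ((u == x) && (v == y) || (u == y) && (v == x)) ->
  (u \in K x y) = (v \in K x y).
Proof.
move=> euv ne; have ruv : remove_edge e x y u v.
  by move: ne; rewrite /remove_edge euv;
  case: (u == x); case: (u == y); case: (v == x); case: (v == y).
apply/idP/idP; rewrite !inE => H; apply: (connect_trans H); apply: connect1 => //.
by rewrite rem_sym.
Qed.

Lemma rem_csym x y : connect_sym (remove_edge e x y).
Proof. exact/sym_connect_sym/rem_sym. Qed.

Lemma K_compl u v : e u v -> forall x, (x \in K v u) = (x \notin K u v).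
Proof.
move=> euv x; rewrite !inE (eq_connect (rem_swap v u)).
apply/idP/idP.
  move=> cvx; apply/negP => cux; move/negP: (ebr euv); apply.
  by apply: connect_trans cux _; rewrite rem_csym.
move=> nux.
have: connect (remove_edge e u v) u x || connect (remove_edge e u v) v x.
  apply: (@connect_ind_gen e (fun y => connect (remove_edge e u v) u y
        || connect (remove_edge e u v) v y) u); [by rewrite connect0 | | exact: econ].
  move=> a b Ha eab.
  case R: (remove_edge e u v a b).
    by case/orP: Ha => H; apply/orP; [left|right]; apply: connect_trans H (connect1 R).
  move: R; rewrite /remove_edge eab /= => /negbFE /orP [] /andP [_ /eqP ->].
    by rewrite connect0 orbT.
  by rewrite connect0.
by rewrite (negbTE nux).
Qed.

Definition avoid u := [rel a b | e a b && (a != u) && (b != u)].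

Lemma K_avoid w u x : e w u -> x \in K w u -> connect (avoid u) w x.
Proof.
move=> ewu; rewrite inE => cwx.
have nu : u \notin K w u by apply: K_notin.
have H := @connect_restrict _ (mem (K w u)) _ _ (K_self w u) _ cwx.
have {}H : connect [rel a b | remove_edge e w u a b && (a \in K w u) && (b \in K w u)] w x.
  apply: H => a b; rewrite !inE => Ha Rab; exact: connect_trans Ha (connect1 Rab).
apply: connect_sub H => a b /= /andP [/andP [Rab Ha] Hb].
apply: connect1; rewrite /avoid /=; move: Rab; rewrite /remove_edge => /andP [-> _] /=.
have [eau|nau] := eqVneq a u; first by subst a; exfalso; move/negP: nu; apply; exact: Ha.
by have [ebu|nbu] := eqVneq b u; first by subst b; exfalso; move/negP: nu; apply; exact: Hb.
Qed.

Lemma avoid_sub u x y : subrel (avoid u) (remove_edge e u y) /\ subrel (avoid u) (remove_edge e x u).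
Proof.
split=> a b /andP [/andP [eab nau] nbu]; rewrite /remove_edge eab /=.
  by rewrite (negbTE nau) (negbTE nbu) !andbF.
by rewrite (negbTE nau) (negbTE nbu) !andbF.
Qed.

Lemma K_sub u v w : e u v -> e u w -> w != v -> K w u \subset K u v.
Proof.
move=> euv euw nwv; apply/subsetP => x cwx; rewrite inE.
have ewu : e w u by rewrite esym.
have H := K_avoid ewu cwx.
have nuw : u != w by apply/eqP => h; rewrite h eirr in euw.
apply: (connect_trans (connect1 (_ : remove_edge e u v u w))).
  rewrite /remove_edge euw eqxx (negbTE nwv) /=.
  by rewrite [w == u]eq_sym (negbTE nuw) andbF.
apply: connect_sub H => a b /(proj1 (avoid_sub u w v)) H; exact: connect1.
Qed.

Lemma K_proper u v w : e u v -> e u w -> w != v -> #|K w u| < #|K u v|.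
Proof.
move=> euv euw nwv; apply: proper_card; rewrite properE K_sub //=.
apply/subsetPn; exists u; first exact: K_self.
by apply: K_notin; rewrite esym.
Qed.

Lemma K_cover u x : x != u -> exists2 w, e u w & x \in K w u.
Proof.
move=> nxu.
have: x = u \/ exists2 w, e u w & x \in K w u.
  apply: (@connect_ind_gen e (fun y => y = u \/ exists2 w, e u w & y \in K w u) u);
    [by left | | exact: econ].
  move=> a b [-> | [w euw Ha]] eab; first by right; exists b => //; exact: K_self.
  case R: (remove_edge e w u a b).
    by right; exists w => //; move: Ha; rewrite !inE => Ha; exact: connect_trans Ha (connect1 R).
  move: R; rewrite /remove_edge eab /= => /negbFE /orP [] /andP [_ /eqP ->].
    by left.
  by right; exists w => //; exact: K_self.
by case=> // /eqP; rewrite (negbTE nxu).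
Qed.

Lemma K_uniq u w w' x : e u w -> e u w' -> x \in K w u -> x \in K w' u -> w = w'.
Proof.
move=> euw euw' Hx Hx'; apply/eqP/negPn/negP => nww.
have ewu : e w u by rewrite esym.
have ew'u : e w' u by rewrite esym.
have H1 := K_avoid ewu Hx; have H2 := K_avoid ew'u Hx'.
have asym : connect_sym (avoid u).
  apply: sym_connect_sym => a b; rewrite /avoid /= esym.
  by case: (a != u); case: (b != u); rewrite ?andbT ?andbF.
have H : connect (avoid u) w w' by apply: connect_trans H1 _; rewrite asym.
have {}H : connect (remove_edge e w u) w w'.
  by apply: connect_sub H => a b /(proj2 (avoid_sub u w w)) H; exact: connect1.
move/negP: (ebr ewu); apply; apply: connect_trans H (connect1 _).
rewrite /remove_edge ew'u [w' == w]eq_sym (negbTE nww) /=.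
have nw'u : w' != u by apply/eqP => h; rewrite h eirr in ew'u.
by rewrite (negbTE nw'u).
Qed.

Lemma card_sumb (A : {set T}) : #|A| = \sum_x (x \in A).
Proof.
rewrite -sum1_card big_mkcond; apply: eq_bigr => x _; by case: (x \in A).
Qed.

Lemma decomp_card u (S : {set T}) :
  #|S| = (u \in S) + \sum_(w | e u w) #|K w u :&: S|.
Proof.
rewrite card_sumb (bigD1 u) //=; congr (_ + _).
rewrite [RHS](eq_bigr (fun w => \sum_x (x \in K w u :&: S))); last by move=> w _; exact: card_sumb.
rewrite exchange_big /= [RHS](bigD1 u) //= [X in X + _]big1 ?add0n; last first.
  move=> w euw; rewrite inE.
  have := K_notin (_ : e w u); rewrite esym => /(_ euw) /negbTE ->; done.
apply: eq_bigr => x nxu.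
have -> : \sum_(w | e u w) (x \in K w u :&: S) = \sum_(w | e u w) ((x \in K w u) && (x \in S)).
  by apply: eq_bigr => w _; rewrite inE.
case xS: (x \in S); last by rewrite big1 // => w _; rewrite andbF.
have [w0 euw0 Hx0] := K_cover nxu.
rewrite (bigD1 w0) //= Hx0 big1 //.
move=> w /andP [euw nw]; rewrite andbT; case Hx: (x \in K w u) => //.
by exfalso; move/eqP: nw; apply; exact: K_uniq euw euw0 Hx Hx0.
Qed.

Definition O (f : T -> nat) := [set x | f x == 1].
Definition cnt f x y := #|K x y :&: O f|.

Lemma ones_in_compE x y f : ones_in_comp e x y f = cnt f x y.
Proof. by apply: eq_card => z; rewrite !inE. Qed.

Lemma cnt_edge f u v : e u v ->
  cnt f u v = (u \in O f) + \sum_(w | e u w && (w != v)) cnt f w u.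
Proof.
move=> euv; rewrite /cnt (decomp_card u) (bigD1 v) //=; congr (_ + _).
  by rewrite in_setI K_self.
rewrite (_ : K v u :&: _ = set0) ?cards0 ?add0n; last first.
  by apply/setP => x; rewrite !in_setI in_set0 K_compl //; case: (x \in K u v).
apply: eq_bigr => w /andP [euw nwv]; apply: eq_card => x.
rewrite !in_setI; case Hx: (x \in K w u) => //=.
by rewrite (subsetP (K_sub euv euw nwv) _ Hx).
Qed.

Lemma cnt_compl f u v : e u v -> cnt f u v + cnt f v u = #|O f|.
Proof.
move=> euv; rewrite /cnt -(cardsID (K u v) (O f)) setIC; congr (_ + _).
by apply: eq_card => x; rewrite in_setI in_setD K_compl // andbC.
Qed.

Definition tr (u v x : T) := if x == u then v else if x == v then u else x.

Lemma tr_inv u v : involutive (tr u v).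
Proof. move=> x; rewrite /tr; repeat case: eqP; congruence. Qed.

Lemma tr_sym u v x : tr u v x = tr v u x.
Proof. rewrite /tr; repeat case: eqP; congruence. Qed.

Lemma swap_eq f g u v (A : {set T}) : (forall x, g x = f (tr u v x)) ->
  (u \in A) = (v \in A) -> #|A :&: O g| = #|A :&: O f|.
Proof.
move=> hg huv; rewrite -(card_preimset _ (can_inj (tr_inv u v))); apply: eq_card => x.
rewrite !inE hg; congr (_ && _); last by rewrite tr_inv.
rewrite /tr; case: (eqVneq x u) => [->|nxu]; first by rewrite huv.
by case: (eqVneq x v) => [->|nxv] //; rewrite huv.
Qed.

Lemma swap_one f g u v (A : {set T}) : (forall x, g x = f (tr u v x)) ->
  u \in A -> v \notin A -> #|A :&: O g| + (f u == 1) = #|A :&: O f| + (f v == 1).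
Proof.
move=> hg uA vA.
rewrite (cardsD1 u (A :&: O g)) (cardsD1 u (A :&: O f)) !inE uA /= hg /tr eqxx.
have -> : (A :&: O g) :\ u = (A :&: O f) :\ u.
  apply/setP => x; rewrite !inE hg /tr.
  case: (eqVneq x u) => //= nxu; case: (eqVneq x v) => [->|//].
  by rewrite (negbTE vA).
lia.
Qed.

Definition E (p : T * T) := e p.1 p.2 && (enum_rank p.1 < enum_rank p.2)%N.
Definition dd f h (p : T * T) := diff_edge e f h p.1 p.2.
Definition Phi h f := \sum_(p : T * T | E p) dd f h p.

Lemma ddE f h p : dd f h p = `|cnt f p.1 p.2 - cnt h p.1 p.2|%N.
Proof. by rewrite /dd /diff_edge !ones_in_compE. Qed.

Lemma neq_edge u v : e u v -> u != v.
Proof. by move=> euv; apply/eqP => h; rewrite h eirr in euv. Qed.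

Lemma phi_split f g h u v : e u v -> (forall x, g x = f (tr u v x)) ->
  exists2 p0, (p0 = (u,v) \/ p0 = (v,u)) &
    exists R, Phi h f = dd f h p0 + R /\ Phi h g = dd g h p0 + R.
Proof.
move=> euv hg.
have ruv : enum_rank u != enum_rank v.
  by apply/eqP => /enum_rank_inj /eqP; apply/negP; exact: neq_edge.
pose p0 := if (enum_rank u < enum_rank v)%N then (u,v) else (v,u).
have Ep0 : E p0.
  rewrite /p0 /E; case: ifP => H /=; first by rewrite euv.
  rewrite esym euv /= ltn_neqAle leqNgt H andbT.
  by rewrite eq_sym.
have hp0 : p0 = (u,v) \/ p0 = (v,u) by rewrite /p0; case: ifP; [left|right].
apply: (ex_intro2 _ _ p0 hp0).
exists (\sum_(p | E p && (p != p0)) dd f h p); split; first by rewrite /Phi (bigD1 p0).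
rewrite /Phi (bigD1 p0) //=; congr (_ + _); apply: eq_bigr => p /andP [Ep np].
rewrite !ddE; have -> // : cnt g p.1 p.2 = cnt f p.1 p.2.
apply: (swap_eq hg); apply: K_edge => //.
apply/negP => /orP [] /andP [/eqP ue /eqP ve].
  have pe : p = (u,v) by rewrite ue ve; case: (p).
  case: hp0 => hp0; first by move: np; rewrite pe hp0 eqxx.
  move: Ep Ep0; rewrite pe hp0 /E /= => /andP [_ H1] /andP [_ H2].
  by move: (ltn_trans H1 H2); rewrite ltnn.
have pe : p = (v,u) by rewrite ue ve; case: (p).
case: hp0 => hp0; last by move: np; rewrite pe hp0 eqxx.
move: Ep Ep0; rewrite pe hp0 /E /= => /andP [_ H1] /andP [_ H2].
by move: (ltn_trans H1 H2); rewrite ltnn.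
Qed.

Lemma phi_self h : Phi h h = 0.
Proof. by rewrite /Phi big1 // => p _; rewrite ddE; lia. Qed.

Lemma adj_tr f g : adjacent e f g -> exists u v, e u v /\ forall x, g x = f (tr u v x).
Proof.
move=> [_ [u [v [euv gu gv go]]]]; exists u, v; split => // x.
rewrite /tr; case: (eqVneq x u) => [->|nxu] //.
case: (eqVneq x v) => [->|nxv] //.
by apply: go; apply/eqP.
Qed.

Lemma lower c f h n : swap_seq c e f h n -> Phi h f <= n.
Proof.
elim=> [f0 _ | f1 g h1 m _ adj _ IH]; first by rewrite phi_self.
have [u [v [euv hg]]] := adj_tr adj.
have [p0 hp0 [R [Pf Pg]]] := phi_split h1 euv hg.
rewrite Pf; move: IH; rewrite Pg => IH.
suff: dd f1 h1 p0 <= dd g h1 p0 + 1 by lia.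
rewrite !ddE; set A := K p0.1 p0.2.
have: cnt g p0.1 p0.2 + (f1 u == 1) = cnt f1 p0.1 p0.2 + (f1 v == 1) \/
      cnt g p0.1 p0.2 + (f1 v == 1) = cnt f1 p0.1 p0.2 + (f1 u == 1) \/
      cnt g p0.1 p0.2 = cnt f1 p0.1 p0.2.
  case uA: (u \in A); case vA: (v \in A).
  - by right; right; apply: (swap_eq hg); rewrite uA vA.
  - by left; apply: (swap_one hg); rewrite ?uA ?vA.
  - right; left; apply: (swap_one (u:=v) (v:=u)); last by rewrite ?uA ?vA.
      by move=> x; rewrite hg tr_sym.
    by rewrite vA.
  - by right; right; apply: (swap_eq hg); rewrite uA vA.
move: (f1 u == 1) (f1 v == 1) => [] []; lia.
Qed.

Lemma sum_lt_ex (P : pred T) (F G : T -> nat) :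
  \sum_(i | P i) F i < \sum_(i | P i) G i -> exists2 i, P i & F i < G i.
Proof.
move=> H; case: (pickP (fun i => P i && (F i < G i))) => [i /andP [Pi Hi] | H0].
  by exists i.
move: H; rewrite ltnNge leq_sum // => i Pi; rewrite leqNgt; move: (H0 i); rewrite Pi /= => -> //.
Qed.

Section Claim.
Variables f h : T -> nat.
Hypothesis fr : forall x, 1 <= f x <= 2.
Hypothesis hr : forall x, 1 <= h x <= 2.

Lemma walk n : forall u w, #|K w u| <= n -> e u w -> f u = 1 ->
  cnt f w u < cnt h w u ->
  exists u' w', [/\ e u' w', f u' = 1, f w' != 1 & cnt f w' u' < cnt h w' u'].
Proof.
elim: n => [|n IH] u w Hn euw fu Hlt.
  by move: Hn; rewrite leqn0 => /eqP /cards0_eq H; move: (K_self w u); rewrite H inE.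
case fw: (f w == 1); last by exists u, w; rewrite fw.
have ewu : e w u by rewrite esym.
move: Hlt; rewrite !(cnt_edge _ ewu) inE fw /= => Hlt.
have: \sum_(z | e w z && (z != u)) cnt f z w < \sum_(z | e w z && (z != u)) cnt h z w.
  by move: Hlt; rewrite inE; case: (h w == 1) => /=; lia.
case/sum_lt_ex => z /andP [ewz nzu] Hz.
apply: (IH w z) => //; last by apply/eqP.
by have := K_proper ewu ewz nzu; lia.
Qed.

Lemma claim : #|O f| = #|O h| -> (exists x, f x != h x) ->
  exists u w, [/\ e u w, f u = 1, f w != 1 & cnt f w u < cnt h w u].
Proof.
move=> Htot [x0 Hx0].
have [a fa ha] : exists2 a, f a = 1 & h a != 1.
  case: (pickP (fun a => (f a == 1) && (h a != 1))) => [a /andP [/eqP fa ha] | H].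
    by exists a.
  have sub : O f \subset O h.
    apply/subsetP => x; rewrite !inE => /eqP fx.
    by have := H x; rewrite fx eqxx /= => /negbFE.
  have eqO : O f = O h by apply/eqP; rewrite eqEcard sub Htot leqnn.
  exfalso; move/negP: Hx0; apply.
  have := congr1 (fun S : {set T} => x0 \in S) eqO; rewrite /= !inE.
  have := fr x0; have := hr x0.
  case: (f x0) => [|[|[|?]]]; case: (h x0) => [|[|[|?]]] //.
have d1 := decomp_card a (O f); have d2 := decomp_card a (O h).
move: d1 d2; rewrite !inE fa eqxx (negbTE ha) => d1 d2.
have: \sum_(w | e a w) cnt f w a < \sum_(w | e a w) cnt h w a.
  rewrite /cnt; lia.
case/sum_lt_ex => w eaw Hw.
apply: (walk (n := #|K w a|)) Hw => //.
Qed.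
End Claim.

Lemma dd_sym f h u w : e u w -> #|O f| = #|O h| -> dd f h (u,w) = dd f h (w,u).
Proof.
move=> euw Ht; rewrite !ddE /=.
have := cnt_compl f euw; have := cnt_compl h euw; lia.
Qed.

Lemma tot_swap f u w : #|O (fun x => f (tr u w x))| = #|O f|.
Proof.
have H : (u \in [set: T]) = (w \in [set: T]) by rewrite !inE.
by have := @swap_eq f (fun x => f (tr u w x)) u w setT (fun x => erefl) H; rewrite !setTI.
Qed.

Lemma good_step f h u w : #|O f| = #|O h| -> e u w -> f u = 1 -> f w != 1 ->
  cnt f w u < cnt h w u ->
  Phi h f = (Phi h (fun x => f (tr u w x))).+1.
Proof.
move=> Ht euw fu fw Hlt; set g := fun x => f (tr u w x).
have [p0 hp0 [R [Pf Pg]]] := phi_split h euw (fun x => erefl : g x = f (tr u w x)).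
have Htg : #|O g| = #|O h| by rewrite tot_swap.
have ewu : e w u by rewrite esym.
have E1 : dd f h p0 = dd f h (w,u) by case: hp0 => -> //; rewrite dd_sym.
have E2 : dd g h p0 = dd g h (w,u) by case: hp0 => -> //; rewrite dd_sym.
rewrite E1 in Pf; rewrite E2 in Pg.
rewrite Pf Pg !ddE /=.
have := @swap_one f g w u (K w u) (fun x => congr1 f (tr_sym u w x)) (K_self w u) (K_notin ewu).
rewrite fu (negbTE fw) eqxx /=; rewrite /cnt in Hlt *; lia.
Qed.

Lemma tp_swap f u w : token_placement 2 f -> token_placement 2 (fun x => f (tr u w x)).
Proof.
move=> [r s]; split=> [v|i /s [v fv]]; first exact: r.
by exists (tr u w v); rewrite tr_inv.
Qed.

Lemma adj_swap f u w : e u w -> f u = 1 -> f w != 1 -> adjacent e f (fun x => f (tr u w x)).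
Proof.
move=> euw fu fw; split.
  move/(congr1 (fun F => F u)); rewrite /tr eqxx fu => H.
  by move: fw; rewrite -H eqxx.
exists u, w; split => //; first by rewrite /tr eqxx.
  rewrite /tr eqxx; case: eqVneq => // ->; done.
by move=> x /eqP nxu /eqP nxw; rewrite /tr (negbTE nxu) (negbTE nxw).
Qed.

Lemma upper h : token_placement 2 h -> forall n f, token_placement 2 f ->
  #|O f| = #|O h| -> Phi h f = n -> swap_seq 2 e f h n.
Proof.
move=> hh; elim=> [|n IH] f hf Ht HP.
  case: (pickP (fun x => f x != h x)) => [x0 Hx0 | H0].
    have [u [w [euw fu fw Hlt]]] := claim (proj1 hf) (proj1 hh) Ht (ex_intro _ x0 Hx0).
    by move: HP; rewrite (good_step Ht euw fu fw Hlt).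
  have -> : f = h by apply: functional_extensionality => x; move: (H0 x) => /= /negbFE /eqP.
  exact: swap_nil.
case: (pickP (fun x => f x != h x)) => [x0 Hx0 | H0]; last first.
  have fh : f = h by apply: functional_extensionality => x; move: (H0 x) => /= /negbFE /eqP.
  by move: HP; rewrite fh phi_self.
have [u [w [euw fu fw Hlt]]] := claim (proj1 hf) (proj1 hh) Ht (ex_intro _ x0 Hx0).
apply: (swap_cons hf (adj_swap euw fu fw)).
apply: IH; first exact: tp_swap.
  by rewrite tot_swap.
by move: HP; rewrite (good_step Ht euw fu fw Hlt) => -[].
Qed.

End Graph.

Theorem mainTheorem9 (T : finType) (e : rel T) (f0 ft : T -> nat) :
  is_tree e ->
  token_placement 2 f0 -> token_placement 2 ft ->
  #|[set v | f0 v == 1]| = #|[set v | ft v == 1]| ->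
  is_OPT 2 e f0 ft
    (\sum_(p : T * T | e p.1 p.2 && (enum_rank p.1 < enum_rank p.2)%N)
        diff_edge e f0 ft p.1 p.2)%N.
Proof.
move=> tree h0 ht Htot; split.
  exact: (upper tree ht h0 Htot (erefl (Phi e ft f0))).
by move=> m /(lower tree).
Qed.
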